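(* Let $G$ be a group, let $\mathcal{R}=\mathbb{C}^N$ with standard basis $e_0,\dots,e_{N-1}$ and $\mathcal{H}=\mathbb{C}^N$ with computational basis $|0\rangle,\dots,|N-1\rangle$. Let $V:G\to\mathcal{U}(\mathcal{R})$ and $W:G\to\mathcal{U}(\mathcal{H})$ be unitary representations. Define, for nonzero $x=\sum_i x_ie_i$, $T(x)=\frac{1}{\|x\|}\sum_i x_i|i\rangle$ and $\hat{T}(x)=\sum_i x_i|i\rangle$, and let $A:G\to\mathcal{U}(\mathcal{H})$ be a representation induced by $\hat{T}$, i.e. $\hat{T}\circ V(g)=A(g)\circ\hat{T}$ for all $g\in G$. Let $U_{inv}$ and $U_\theta$ be unitaries on $\mathcal{H}$, let $\mathcal{O}$ be an observable on $\mathcal{H}$, and set $$h_\theta(x)=\operatorname{tr}\!\left[U_{inv}U_\theta T(x)\,(U_{inv}U_\theta T(x))^\dagger\,\mathcal{O}\right].$$ If $U_{inv}$ and $\mathcal{O}$ commute with $W(g)$ for all $g\in G$, and $U_\theta$ is an intertwining map from $A$ to $W$, i.e. $U_\theta A(g)=W(g)U_\theta$ for all $g\in G$, then $h_\theta(V(g)x)=h_\theta(x)$ for all $g\in G$ and all nonzero $x\in\mathcal{R}$.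
   Context: $\mathcal{U}(\cdot)$ denotes the group of unitary operators; a unitary representation is a homomorphism into it. $T(x)$ is viewed as a column vector so $T(x)T(x)^\dagger$ is the corresponding density matrix. *)

(* Defs.v *)
From HB Require Import structures.
From mathcomp Require Import all_boot all_order all_algebra.
From mathcomp Require Import sesquilinear spectral.
Set Implicit Arguments. Unset Strict Implicit. Unset Printing Implicit Defensive.
Import Order.TTheory GRing.Theory Num.Theory.
Local Open Scope ring_scope.
Local Open Scope sesquilinear_scope.

Definition unitary_rep (G : groupType) (C : numClosedFieldType) (N : nat)
    (rho : G -> 'M[C]_N) : Prop :=
  [/\ forall g, rho g \is unitarymx,
      rho 1%g = 1%:M
    & forall g h, rho (g * h)%g = rho g *m rho h].

Definition vnorm (C : numClosedFieldType) (N : nat) (x : 'cV[C]_N) : C :=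
  sqrtC (\sum_(i < N) `|x i 0| ^+ 2).

(* hat T(x) = sum_i x_i |i>  (coordinates copied to the computational basis) *)
Definition That (C : numClosedFieldType) (N : nat) (x : 'cV[C]_N) : 'cV[C]_N :=
  \col_(i < N) x i 0.

Definition Tenc (C : numClosedFieldType) (N : nat) (x : 'cV[C]_N) : 'cV[C]_N :=
  (vnorm x)^-1 *: That x.

Definition htheta (C : numClosedFieldType) (N : nat)
    (Uinv Utheta O : 'M[C]_N) (x : 'cV[C]_N) : C :=
  let psi := Uinv *m Utheta *m Tenc x in
  \tr (psi *m psi ^t* *m O).

(* Main.v *)
Require Import Defs.
From HB Require Import structures.
From mathcomp Require Import all_boot all_order all_algebra.
From mathcomp Require Import sesquilinear spectral.
Import Order.TTheory GRing.Theory Num.Theory.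
Local Open Scope ring_scope.
Local Open Scope sesquilinear_scope.

Lemma adjM (C : numClosedFieldType) m n p (M : 'M[C]_(m, n)) (P : 'M[C]_(n, p)) :
  (M *m P)^t* = P^t* *m M^t*.
Proof. by rewrite trmx_mul map_mxM. Qed.

Lemma vnormE (C : numClosedFieldType) N (x : 'cV[C]_N) :
  vnorm x = sqrtC ((x^t* *m x) 0 0).
Proof.
rewrite /vnorm mxE; congr sqrtC; apply: eq_bigr => i _.
by rewrite !mxE normCK mulrC.
Qed.

Lemma adjK (C : numClosedFieldType) n (M : 'M[C]_n) :
  M \is unitarymx -> M^t* *m M = 1%:M.
Proof. by move=> Mu; rewrite -[LHS]mul1mx mulmxA mulmxKtV. Qed.

Theorem proposition2 (G : groupType) (C : numClosedFieldType) (N : nat)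
    (V W A : G -> 'M[C]_N) (Uinv Utheta O : 'M[C]_N) :
  unitary_rep V -> unitary_rep W -> unitary_rep A ->
  (forall g x, That (V g *m x) = A g *m That x) ->
  Uinv \is unitarymx -> Utheta \is unitarymx ->
  O \is hermsymmx ->
  (forall g, Uinv *m W g = W g *m Uinv) ->
  (forall g, O *m W g = W g *m O) ->
  (forall g, Utheta *m A g = W g *m Utheta) ->
  forall g (x : 'cV[C]_N), x != 0 ->
    htheta Uinv Utheta O (V g *m x) = htheta Uinv Utheta O x.
Proof.
move=> [Vu _ _] [Wu _ _] _ hT _ _ _ hUW hOW hUA g x _.
have That_id y : That y = y by apply/matrixP => i j; rewrite !mxE (ord1 j).
have VA : V g *m x = A g *m x by rewrite -[LHS]That_id hT That_id.
have nV : vnorm (V g *m x) = vnorm x.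
  rewrite !vnormE adjM mulmxA -(mulmxA _ _ (V g)) -(mulmxA (x^t*)).
  by rewrite adjK // mul1mx.
rewrite /htheta /Tenc nV !That_id VA.
set c := (vnorm x)^-1.
have -> : Uinv *m Utheta *m (c *: (A g *m x)) = W g *m (Uinv *m Utheta *m (c *: x)).
  by rewrite -!scalemxAr !mulmxA -(mulmxA Uinv) hUA mulmxA hUW.
set psi := Uinv *m Utheta *m (c *: x).
have hO : (W g)^t* *m O *m W g = O.
  by rewrite -mulmxA hOW mulmxA adjK // mul1mx.
have -> : W g *m psi *m (W g *m psi)^t* *m O =
    W g *m (psi *m psi^t* *m ((W g)^t* *m O)).
  by rewrite adjM !mulmxA.
rewrite -mulmxA in hO; by rewrite [LHS]mxtrace_mulC -!mulmxA hO.
Qed.
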